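(* Let $\mathbb{K}$ be a field with $\mathbb{Q}\subseteq\mathbb{K}\subseteq\mathbb{C}$, and let $n\ge 1$. Suppose the complex numbers $x_1,\dots,x_n$ and $y_1,\dots,y_n$ satisfy the system $$f_j(x_1,\dots,x_n,y_1,\dots,y_n)=0\qquad(j=1,\dots,n)$$ for some polynomials $f_j(X_1,\dots,X_n,Y_1,\dots,Y_n)\in\mathbb{K}[X_1,\dots,X_n,Y_1,\dots,Y_n]$, $j=1,\dots,n$. If $x_1,\dots,x_n$ are algebraically independent over $\mathbb{K}$ and $$\det\Big(\frac{\partial f_j}{\partial X_i}(x_1,\dots,x_n,y_1,\dots,y_n)\Big)_{1\le i,j\le n}\neq 0,$$ then $y_1,\dots,y_n$ are algebraically independent over $\mathbb{K}$.
   Context: In the Jacobian matrix, $j$ indexes rows and $i$ indexes columns (the determinant is of an $n\times n$ matrix). *)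

(* Defs.v *)
From HB Require Import structures.
From mathcomp Require Import all_boot all_order all_algebra.
From mathcomp.multinomials Require Import mpoly.
From mathcomp.real_closed Require Import complex.
From mathcomp Require Import Rstruct.
Set Implicit Arguments. Unset Strict Implicit. Unset Printing Implicit Defensive.
Import Order.TTheory GRing.Theory Num.Theory.
Local Open Scope ring_scope.

Definition C : Type := complex Rdefinitions.R.
(* K is a subfield of C: contains 1, closed under subtraction and division.
   (Any such K automatically contains Q since C has characteristic 0.) *)
Definition is_subfield (K : {pred C}) : Prop := GRing.divring_closed K.

Definition alg_indep (K : {pred C}) (n : nat) (x : 'I_n -> C) : Prop :=
  forall p : {mpoly C[n]}, p \is a mpolyOver n K -> p.@[x] = 0 -> p = 0.

(* The point (x_1,..,x_n,y_1,..,y_n) of C^(n+n); variable X_i is index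
   lshift n i, variable Y_i is index rshift n i. *)
Definition pt (n : nat) (x y : 'I_n -> C) : 'I_(n + n) -> C :=
  fun k => match split k with inl i => x i | inr i => y i end.

Definition jacX (n : nat) (f : 'I_n -> {mpoly C[n + n]}) (x y : 'I_n -> C)
  : 'M[C]_n :=
  \matrix_(j < n, i < n) ((f j)^`M(lshift n i)).@[pt x y].

(* Main.v *)
Require Import Defs.
From HB Require Import structures.
From mathcomp Require Import all_boot all_order all_algebra.
From mathcomp.multinomials Require Import mpoly.
From mathcomp.real_closed Require Import complex.
From mathcomp Require Import Rstruct.
From mathcomp Require Import ring.
From Stdlib Require Import ClassicalEpsilon Classical.
Import GRing.Theory Num.Theory.
Local Open Scope ring_scope.

Set Implicit Arguments. Unset Strict Implicit. Unset Printing Implicit Defensive.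
Section Main.
Variable K : {pred C}.
Hypothesis hK : is_subfield K.
HB.instance Definition _ := GRing.isDivringClosed.Build C K hK.

Record isDer (R : C -> Prop) (D : C -> C) : Prop := IsDer {
  dK : forall k, k \in K -> R k;
  dD : forall a b, R a -> R b -> R (a + b);
  dM : forall a b, R a -> R b -> R (a * b);
  dN : forall a, R a -> R (- a);
  DD : forall a b, R a -> R b -> D (a + b) = D a + D b;
  DM : forall a b, R a -> R b -> D (a * b) = D a * b + a * D b;
  DK : forall k, k \in K -> D k = 0 }.

Lemma sumX_deriv N (j : 'I_N) (z w : 'I_N -> C) :
  \sum_i (('X_j : {mpoly C[N]})^`M(i)).@[z] * w i = w j.
Proof.
rewrite (bigD1 j) //= big1 ?addr0.
  rewrite mderivX mnm1E eqxx.
  have -> : (U_(j) - U_(j) = 0)%MM by rewrite -{1}(add0m U_(j)%MM) addmK.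
  by rewrite mpolyX0 scale1r meval1 mul1r.
move=> i /negbTE nij; rewrite mderivX mnm1E eq_sym nij scale0r meval0.
by rewrite mul0r.
Qed.

Section Chain.
Variables (R : C -> Prop) (D : C -> C) (hD : isDer R D).
Variables (N : nat) (z : 'I_N -> C) (hz : forall i, R (z i)).

Definition Qc (g : {mpoly C[N]}) :=
  R g.@[z] /\ D g.@[z] = \sum_i (g^`M(i)).@[z] * D (z i).

Lemma Qc_add g h : Qc g -> Qc h -> Qc (g + h).
Proof.
case=> Rg Dg [Rh Dh]; split; rewrite mevalD; first exact: (dD hD).
rewrite (DD hD) // Dg Dh -big_split /=; apply: eq_bigr => i _.
by rewrite mderivD mevalD mulrDl.
Qed.

Lemma Qc_mul g h : Qc g -> Qc h -> Qc (g * h).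
Proof.
case=> Rg Dg [Rh Dh]; split; rewrite mevalM; first exact: (dM hD).
rewrite (DM hD) // Dg Dh mulr_suml mulr_sumr -big_split /=; apply: eq_bigr => i _.
rewrite mderivM mevalD !mevalM; ring.
Qed.

Lemma Qc_C c : c \in K -> Qc c%:MP.
Proof.
move=> Kc; split; rewrite mevalC; first exact: (dK hD).
rewrite (DK hD) // big1 // => i _; by rewrite mderivC meval0 mul0r.
Qed.

Lemma Qc_X i : Qc 'X_i.
Proof. split; rewrite mevalXU //; by rewrite sumX_deriv. Qed.

Lemma Qc_over g : g \is a mpolyOver N K -> Qc g.
Proof.
move=> /mpolyOverP Kg; rewrite (mpolyE g).
elim/big_ind: _ => //; first by rewrite -(mpolyC0) ; apply: Qc_C; rewrite rpred0.
  exact: Qc_add.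
move=> m _; rewrite -mul_mpolyC; apply: Qc_mul; first exact: Qc_C.
rewrite mpolyXE_id; elim/big_ind: _ => //; first by rewrite -mpolyC1; apply: Qc_C; rewrite rpred1.
  exact: Qc_mul.
move=> i _; elim: (m i) => [|k IH]; first by rewrite expr0 -mpolyC1; apply: Qc_C; rewrite rpred1.
by rewrite exprS; apply: Qc_mul => //; apply: Qc_X.
Qed.
End Chain.

Section Base.
Variables (n : nat) (x : 'I_n -> C) (hx : alg_indep K x) (u : 'I_n -> C).

Definition R0 (c : C) := exists q : {mpoly C[n]}, q \is a mpolyOver n K /\ c = q.@[x].
Definition rep (c : C) : {mpoly C[n]} :=
  epsilon (inhabits 0) (fun q => q \is a mpolyOver n K /\ c = q.@[x]).
Definition D0 (c : C) := \sum_i ((rep c)^`M(i)).@[x] * u i.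

Lemma rep_eq q : q \is a mpolyOver n K -> rep q.@[x] = q.
Proof.
move=> Kq.
have [Kr e] : rep q.@[x] \is a mpolyOver n K /\ q.@[x] = (rep q.@[x]).@[x] :=
  epsilon_spec (inhabits 0) (fun p => p \is a mpolyOver n K /\ q.@[x] = p.@[x])
    (ex_intro _ q (conj Kq erefl)).
apply/eqP; rewrite -subr_eq0; apply/eqP; apply: hx; first by rewrite rpredB.
by rewrite mevalB -e subrr.
Qed.

Lemma D0E q : q \is a mpolyOver n K -> D0 q.@[x] = \sum_i (q^`M(i)).@[x] * u i.
Proof. by move=> Kq; rewrite /D0 rep_eq. Qed.

Lemma base_der : isDer R0 D0.
Proof.
split.
- by move=> k Kk; exists k%:MP; rewrite mpolyOverC mevalC.
- by move=> a b [qa [Ka ->]] [qb [Kb ->]]; exists (qa + qb); rewrite rpredD ?mevalD.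
- by move=> a b [qa [Ka ->]] [qb [Kb ->]]; exists (qa * qb); rewrite rpredM ?mevalM.
- by move=> a [qa [Ka ->]]; exists (- qa); rewrite rpredN ?mevalN.
- move=> a b [qa [Ka ->]] [qb [Kb ->]]; rewrite -mevalD !D0E ?rpredD //.
  by rewrite -big_split; apply: eq_bigr => i _; rewrite mderivD mevalD mulrDl.
- move=> a b [qa [Ka ->]] [qb [Kb ->]]; rewrite -mevalM !D0E ?rpredM //.
  rewrite mulr_suml mulr_sumr -big_split /=; apply: eq_bigr => i _.
  rewrite mderivM mevalD !mevalM; ring.
- move=> k Kk; rewrite -(mevalC x k) D0E ?mpolyOverC // big1 // => i _.
  by rewrite mderivC meval0 mul0r.
Qed.

Lemma base_x j : R0 (x j) /\ D0 (x j) = u j.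
Proof.
have KX : ('X_j : {mpoly C[n]}) \is a mpolyOver n K by apply: mpolyOverX.
split; first by exists 'X_j; rewrite mevalXU.
by rewrite -[x j](mevalXU x) D0E // sumX_deriv.
Qed.
End Base.

Lemma ex_min (P : nat -> Prop) : (exists m, P m) -> exists m, P m /\ forall k, (k < m)%N -> ~ P k.
Proof.
move=> [m Pm]; elim/ltn_ind: m Pm => m IH Pm.
case: (classic (exists k, (k < m)%N /\ P k)) => [[k [lt Pk]]|no].
  exact: IH k lt Pk.
by exists m; split=> // k lt Pk; apply: no; exists k.
Qed.

Section Ext.
Variables (R : C -> Prop) (D : C -> C) (hD : isDer R D) (t : C).

Lemma Rzero : R 0. Proof. by apply: (dK hD); rewrite rpred0. Qed.
Lemma Rone : R 1. Proof. by apply: (dK hD); rewrite rpred1. Qed.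
Lemma Dzero : D 0 = 0.
Proof.
have h := DD hD Rzero Rzero; rewrite addr0 in h.
by apply: (addrI (D 0)); rewrite -h addr0.
Qed.

Lemma R_sum (I : Type) (r : seq I) (F : I -> C) :
  (forall i, R (F i)) -> R (\sum_(i <- r) F i).
Proof.
move=> h; elim: r => [|a r IH]; rewrite ?big_nil ?big_cons; first exact: Rzero.
exact: (dD hD).
Qed.

Lemma R_natmul a k : R a -> R (a *+ k).
Proof.
move=> Ra; elim: k => [|k IH]; first by rewrite mulr0n; exact: Rzero.
by rewrite mulrS; apply: (dD hD).
Qed.

Definition overR (G : {poly C}) := forall i, R G`_i.

Lemma overR0 : overR 0. Proof. by move=> i; rewrite coef0; exact: Rzero. Qed.
Lemma overRC c : R c -> overR c%:P.
Proof. by move=> Rc i; rewrite coefC; case: eqP => _ //; exact: Rzero. Qed.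
Lemma overRX : overR 'X.
Proof. by move=> i; rewrite coefX; case: eqP => _; [exact: Rone | exact: Rzero]. Qed.
Lemma overRD G H : overR G -> overR H -> overR (G + H).
Proof. by move=> oG oH i; rewrite coefD; apply: (dD hD). Qed.
Lemma overRN G : overR G -> overR (- G).
Proof. by move=> oG i; rewrite coefN; apply: (dN hD). Qed.
Lemma overRM G H : overR G -> overR H -> overR (G * H).
Proof.
move=> oG oH i; rewrite coefM; apply: R_sum => j; exact: (dM hD).
Qed.
Lemma overRZ c G : R c -> overR G -> overR (c *: G).
Proof. by move=> Rc oG; rewrite -mul_polyC; apply: overRM => //; apply: overRC. Qed.
Lemma overRXn d : overR 'X^d.
Proof.
elim: d => [|d IH]; first by rewrite expr0 -polyC1; apply: overRC; exact: Rone.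
by rewrite exprS; apply: overRM => //; exact: overRX.
Qed.
Lemma overRderiv G : overR G -> overR G^`().
Proof. by move=> oG i; rewrite coef_deriv; apply: R_natmul. Qed.

Definition delta (G : {poly C}) := \sum_(i < size G) D G`_i * t ^+ i.

Lemma delta_wide (G : {poly C}) m : (size G <= m)%N -> delta G = \sum_(i < m) D G`_i * t ^+ i.
Proof.
move=> hm; rewrite /delta (big_ord_widen m (fun i => D G`_i * t ^+ i) hm) big_mkcond /=.
apply: eq_bigr => i _; case: ifP => // /negbT; rewrite -leqNgt => hi.
by rewrite nth_default // Dzero mul0r.
Qed.

Lemma delta0 : delta 0 = 0.
Proof. by rewrite /delta size_poly0 big_ord0. Qed.

Lemma deltaD G H : overR G -> overR H -> delta (G + H) = delta G + delta H.
Proof.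
move=> oG oH; set m := maxn (size G) (size H).
rewrite (delta_wide (G := G + H) (m := m)) ?size_add // (delta_wide (G := G) (m := m)) ?leq_maxl //.
rewrite (delta_wide (G := H) (m := m)) ?leq_maxr // -big_split /=.
by apply: eq_bigr => i _; rewrite coefD (DD hD) // mulrDl.
Qed.

Lemma deltaCM c Q : R c -> overR Q -> delta (c%:P * Q) = D c * Q.[t] + c * delta Q.
Proof.
move=> Rc oQ; rewrite (delta_wide (m := size Q)); last by rewrite mul_polyC size_scale_leq.
rewrite horner_coef /delta mulr_sumr mulr_sumr -big_split /=.
by apply: eq_bigr => i _; rewrite coefCM (DM hD) //; ring.
Qed.

Lemma deltaXM Q : overR Q -> delta ('X * Q) = t * delta Q.
Proof.
move=> oQ; rewrite (delta_wide (m := (size Q).+1)); last first.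
  by apply: leq_trans (size_polyMleq _ _) _; rewrite size_polyX.
rewrite big_ord_recl coefXM eqxx Dzero mul0r add0r /delta mulr_sumr.
by apply: eq_bigr => i _; rewrite coefXM /= exprS; ring.
Qed.

Lemma deltaXnM d Q : overR Q -> delta ('X^d * Q) = t ^+ d * delta Q.
Proof.
move=> oQ; elim: d => [|d IH]; first by rewrite expr0 !mul1r.
rewrite exprS -mulrA deltaXM ?IH ?exprS ?mulrA //.
by apply: overRM => //; apply: overRXn.
Qed.

Lemma delta_sum (I : Type) (r : seq I) (F : I -> {poly C}) :
  (forall i, overR (F i)) ->
  overR (\sum_(i <- r) F i) /\ delta (\sum_(i <- r) F i) = \sum_(i <- r) delta (F i).
Proof.
move=> h; elim: r => [|a r [IH1 IH2]]; rewrite ?big_nil ?big_cons.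
  by split; [exact: overR0 | exact: delta0].
by split; [exact: overRD | rewrite deltaD // IH2].
Qed.

Lemma deltaM G H : overR G -> overR H -> delta (G * H) = delta G * H.[t] + G.[t] * delta H.
Proof.
move=> oG oH.
have eG : G = \sum_(i < size G) (G`_i)%:P * 'X^i.
  by rewrite -{1}[G]coefK poly_def; apply: eq_bigr => i _; rewrite mul_polyC.
have oT : forall i : 'I_(size G), overR ((G`_i)%:P * ('X^i * H)).
  by move=> i; apply: overRM; [exact: overRC | apply: overRM => //; exact: overRXn].
rewrite {1}eG mulr_suml.
rewrite (eq_bigr (fun i : 'I_(size G) => (G`_i)%:P * ('X^i * H))); last by move=> i _; rewrite mulrA.
have [_ ->] := delta_sum (index_enum _) oT.
have -> : delta G = \sum_(i < size G) D G`_i * t ^+ i by [].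
rewrite [G.[t]]horner_coef mulr_suml mulr_suml -big_split /=.
apply: eq_bigr => i _; rewrite deltaCM //; last by apply: overRM => //; exact: overRXn.
rewrite deltaXnM // hornerM hornerXn; ring.
Qed.

Section WithS.
Variable s : C.
Definition Delta (G : {poly C}) := delta G + G^`().[t] * s.

Lemma Delta0 : Delta 0 = 0.
Proof. by rewrite /Delta delta0 deriv0 horner0 mul0r addr0. Qed.

Lemma DeltaD G H : overR G -> overR H -> Delta (G + H) = Delta G + Delta H.
Proof. by move=> oG oH; rewrite /Delta deltaD // derivD hornerD; ring. Qed.

Lemma DeltaM G H : overR G -> overR H -> Delta (G * H) = Delta G * H.[t] + G.[t] * Delta H.
Proof. by move=> oG oH; rewrite /Delta deltaM // derivM hornerD !hornerM; ring. Qed.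

Lemma DeltaC c : R c -> Delta c%:P = D c.
Proof.
move=> Rc; rewrite /Delta derivC horner0 mul0r addr0 (delta_wide (m := 1)) ?size_polyC_leq1 //.
by rewrite big_ord1 coefC /= expr0 mulr1.
Qed.


Lemma Delta_root G0 : overR G0 -> G0 != 0 -> G0.[t] = 0 -> Delta G0 = 0 ->
  (forall G, overR G -> G != 0 -> G.[t] = 0 -> (size G0 <= size G)%N) ->
  forall G, overR G -> G.[t] = 0 -> Delta G = 0.
Proof.
move=> oG0 nz0 r0 DG0 min G; have [k] := ubnP (size G); elim: k G => // k IH G hk oG rG.
have [->|nzG] := eqVneq G 0; first exact: Delta0.
have le0 := min G oG nzG rG.
set c := lead_coef G0; set l := lead_coef G; set d := (size G - size G0)%N.
have Rc : R c by exact: oG0.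
have Rl : R l by exact: oG.
have nzc : c != 0 by rewrite lead_coef_eq0.
have nzl : l != 0 by rewrite lead_coef_eq0.
set H := (l%:P * 'X^d) * G0.
have oLX : overR (l%:P * 'X^d) by apply: overRM; [exact: overRC | exact: overRXn].
have oH : overR H by exact: overRM.
have sH : size H = size G.
  rewrite /H -mulrA mul_polyC size_scale // size_mul //.
    by rewrite size_polyXn addSn /= /d subnK.
  by rewrite -size_poly_eq0 size_polyXn.
have lH : lead_coef H = l * c by rewrite /H lead_coefM lead_coefM lead_coefC lead_coefXn mulr1.
set G1 := c *: G - H.
have oG1 : overR G1 by apply: overRD; [exact: overRZ | exact: overRN].
have rG1 : G1.[t] = 0.
  by rewrite /G1 hornerD hornerN hornerZ /H hornerM r0 rG !mulr0 oppr0 addr0.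
have sG1 : (size G1 < size G)%N.
  have pos : (0 < size G)%N by rewrite size_poly_gt0.
  rewrite -(prednK pos) ltnS; apply/leq_sizeP => j hj.
  rewrite /G1 coefB coefZ.
  move: hj; rewrite leq_eqVlt => /orP [/eqP ej|lj].
    rewrite -ej; have := lH; rewrite lead_coefE sH => ->.
    by rewrite -lead_coefE -/l mulrC subrr.
  rewrite prednK // in lj.
  have lj' : (size H <= j)%N by rewrite sH.
  by rewrite (nth_default _ lj) (nth_default _ lj') mulr0 subrr.
have DG1 : Delta G1 = 0.
  by apply: IH oG1 rG1; apply: leq_trans sG1 _; rewrite -ltnS.
have DH : Delta H = 0 by rewrite /H DeltaM // DG0 r0 !mulr0 addr0.
have : Delta (c *: G) = c * Delta G.
  rewrite -mul_polyC DeltaM //; last exact: overRC.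
  by rewrite DeltaC // rG mulr0 add0r hornerC.
have -> : c *: G = G1 + H by rewrite /G1 subrK.
rewrite DeltaD // DG1 DH addr0 => /esym /eqP; rewrite mulf_eq0 (negbTE nzc) /=.
by move/eqP.
Qed.

End WithS.

Definition Rt (c : C) := exists G, overR G /\ c = G.[t].

Lemma ext : exists D', isDer Rt D' /\ (forall a, R a -> Rt a /\ D' a = D a) /\ Rt t.
Proof.
have [s hs] : exists s, forall G, overR G -> G.[t] = 0 -> Delta s G = 0.
  case: (classic (exists m, exists G, [/\ overR G, G != 0, G.[t] = 0 & size G = m])).
    move/ex_min => [m [[G0 [oG0 nz0 r0 sz0]] mn]].
    have min : forall G, overR G -> G != 0 -> G.[t] = 0 -> (size G0 <= size G)%N.
      move=> G oG nzG rG; rewrite leqNgt; apply/negP => lt.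
      by apply: (mn (size G)); [rewrite -sz0 | exists G].
    have s2 : (1 < size G0)%N.
      rewrite ltnNge; apply/negP => le1; move: nz0 r0; rewrite (size1_polyC le1) hornerC.
      by move=> /negP nz e; apply: nz; rewrite e.
    have nzd : G0^`() != 0.
      apply/eqP => e; have := congr1 (fun p : {poly C} => p`_(size G0).-2) e.
      rewrite coef_deriv coef0 => /eqP; rewrite mulrn_eq0 /=.
      have -> : ((size G0).-2).+1 = (size G0).-1 by case: (size G0) s2 => [|[|k]].
      by rewrite -lead_coefE lead_coef_eq0 (negbTE nz0).
    have nzdt : G0^`().[t] != 0.
      apply/eqP => e; have := min _ (overRderiv oG0) nzd e.
      by rewrite leqNgt lt_size_deriv.
    exists (- delta G0 / G0^`().[t]).
    apply: Delta_root oG0 nz0 r0 _ min.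
    by rewrite /Delta; field.
  move=> no; exists 0 => G oG rG.
  have -> : G = 0; last exact: Delta0.
  apply/eqP; apply: contraT => nzG; exfalso; apply: no.
  by exists (size G); exists G; split.
set P := fun c G => overR G /\ c = G.[t].
pose rp c := epsilon (inhabits 0) (P c).
have rpE : forall c, Rt c -> P c (rp c).
  by move=> c hc; apply: epsilon_spec.
pose D' c := Delta s (rp c).
have D'E : forall G, overR G -> D' G.[t] = Delta s G.
  move=> G oG; have [o1 e1] := rpE G.[t] (ex_intro _ G (conj oG erefl)).
  have o2 : overR (rp G.[t] - G) by apply: overRD => //; exact: overRN.
  have : Delta s (rp G.[t] - G) = 0 by apply: hs => //; rewrite hornerD hornerN -e1 subrr.
  move=> h; rewrite /D'; have -> : rp G.[t] = (rp G.[t] - G) + G by rewrite subrK.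
  by rewrite DeltaD // h add0r.
exists D'; split; last split.
- split.
  + by move=> k Kk; exists k%:P; rewrite hornerC; split => //; apply: overRC; exact: (dK hD).
  + move=> a b [G [oG ->]] [H [oH ->]]; exists (G + H); rewrite hornerD; split => //.
    exact: overRD.
  + move=> a b [G [oG ->]] [H [oH ->]]; exists (G * H); rewrite hornerM; split => //.
    exact: overRM.
  + move=> a [G [oG ->]]; exists (- G); rewrite hornerN; split => //; exact: overRN.
  + move=> a b [G [oG ->]] [H [oH ->]]; rewrite -hornerD !D'E //; first exact: DeltaD.
    exact: overRD.
  + move=> a b [G [oG ->]] [H [oH ->]]; rewrite -hornerM !D'E //; first exact: DeltaM.
    exact: overRM.
  + move=> k Kk; have Rk := dK hD Kk.
    by rewrite -(hornerC k t) D'E ?DeltaC ?(DK hD) //; exact: overRC.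
- move=> a Ra; split; first by exists a%:P; rewrite hornerC; split => //; exact: overRC.
  by rewrite -{1}(hornerC a t) D'E ?DeltaC //; exact: overRC.
- by exists 'X; rewrite hornerX; split => //; exact: overRX.
Qed.
End Ext.

Lemma ext_seq (s : seq C) R D : isDer R D -> exists R' D', isDer R' D' /\
  (forall a, R a -> R' a /\ D' a = D a) /\ (forall c, c \in s -> R' c).
Proof.
elim: s R D => [|t s IH] R D hD.
  by exists R, D; split => //; split.
have [D1 [h1 [agr1 Rt1]]] := ext hD t.
have [R2 [D2 [h2 [agr2 Rs2]]]] := IH _ _ h1.
exists R2, D2; split => //; split.
  move=> a Ra; have [Ra1 e1] := agr1 a Ra; have [Ra2 e2] := agr2 a Ra1.
  by split => //; rewrite e2 e1.
move=> c; rewrite in_cons => /orP [/eqP ->|cs]; first by have [] := agr2 t Rt1.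
exact: Rs2.
Qed.

Lemma pt_l n (x y : 'I_n -> C) l : pt x y (lshift n l) = x l.
Proof. by rewrite /pt (unsplitK (inl l : 'I_n + 'I_n)). Qed.
Lemma pt_r n (x y : 'I_n -> C) l : pt x y (rshift n l) = y l.
Proof. by rewrite /pt (unsplitK (inr l : 'I_n + 'I_n)). Qed.

Lemma der_exists n (x y : 'I_n -> C) (hx : alg_indep K x) (u : 'I_n -> C) :
  exists R D, isDer R D /\ (forall j, R (x j) /\ D (x j) = u j) /\ (forall j, R (y j)).
Proof.
have hb := base_der hx u.
have [R' [D' [h' [agr Rs]]]] := ext_seq [seq y j | j <- enum 'I_n] hb.
exists R', D'; split => //; split.
  move=> j; have [R0x D0x] := base_x hx u j; have [r e] := agr _ R0x.
  by split => //; rewrite e.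
by move=> j; apply: Rs; apply: map_f; rewrite mem_enum.
Qed.

Lemma mderiv_over n (p : {mpoly C[n]}) k :
  p \is a mpolyOver n K -> p^`M(k) \is a mpolyOver n K.
Proof.
move=> /mpolyOverP h; apply/mpolyOverP => m; rewrite mcoeff_deriv rpredMn //.
Qed.

Lemma msize_deriv n (p : {mpoly C[n]}) k : p != 0 -> (msize (p^`M(k)) < msize p)%N.
Proof.
move=> nz; have pos : (0 < msize p)%N by rewrite lt0n msize_poly_eq0.
rewrite -(prednK pos) ltnS msizeE big_seq; elim/big_ind: _ => //.
  by move=> a b ha hb; rewrite geq_max ha hb.
move=> m hm.
have : (p^`M(k))@_m != 0 by rewrite mcoeff_eq0 negbK.
rewrite mcoeff_deriv mulrn_eq0 negb_or => /andP [_ nz'].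
have : (m + U_(k))%MM \in msupp p by rewrite -[_ \in _]negbK -mcoeff_eq0.
move/msize_mdeg_lt; rewrite mdegD mdeg1 addn1 => lt.
by rewrite -ltnS prednK.
Qed.

Lemma const_of_deriv n (p : {mpoly C[n]}) : (forall k, p^`M(k) = 0) -> p = (p@_0)%:MP.
Proof.
move=> h; apply/mpolyP => m; rewrite mcoeffC.
have [->|nz] := eqVneq m 0%MM; first by rewrite ?eqxx mulr1.
rewrite ?(negbTE nz) mulr0.
have [i hi] : exists i, (0 < m i)%N.
  case: (pickP (fun i => 0 < m i)%N) => [i hi|none]; first by exists i.
  exfalso; move/negP: nz; apply; apply/eqP/mnmP => i; have := none i.
  by rewrite mnm0E lt0n => /negbT; rewrite negbK => /eqP.
have le : (U_(i) <= m)%MM.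
  by apply/mnm_lepP => j; rewrite mnm1E; case: eqP => // <-.
have := congr1 (mcoeff (m - U_(i))) (h i); rewrite mcoeff_deriv submK // mcoeff0.
by move/eqP; rewrite mulrn_eq0 /= => /eqP.
Qed.

Lemma sum_delta n (F : 'I_n -> C) i : \sum_l F l * (i == l)%:R = F i.
Proof.
rewrite (bigD1 i) //= eqxx mulr1 big1 ?addr0 // => l /negbTE nl.
by rewrite eq_sym nl mulr0.
Qed.

Theorem main (n : nat) (hn : (1 <= n)%N)
  (x y : 'I_n -> C) (f : 'I_n -> {mpoly C[n + n]})
  (hfK : forall j, f j \is a mpolyOver (n + n) K)
  (hf0 : forall j, (f j).@[pt x y] = 0)
  (hx : alg_indep K x)
  (hdet : \det (jacX f x y) != 0) :
  alg_indep K y.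
Proof.
move=> p Kp py; apply/eqP; apply: contraT => nzp; exfalso.
have := ex_min (ex_intro (fun m => exists q : {mpoly C[n]},
   [/\ q \is a mpolyOver n K, q != 0, q.@[y] = 0 & msize q = m]) _
   (ex_intro _ p (And4 Kp nzp py erefl))).
case=> m [[p0 [Kp0 nz0 r0 sz0]] mn].
have min : forall q, q \is a mpolyOver n K -> q != 0 -> q.@[y] = 0 -> (msize p0 <= msize q)%N.
  move=> q Kq nzq rq; rewrite leqNgt; apply/negP => lt.
  by apply: (mn (msize q)); [rewrite -sz0 | exists q].
have [k nzk] : exists k, p0^`M(k) != 0.
  apply: NNPP => no.
  have h : forall k, p0^`M(k) = 0.
    by move=> k; apply/eqP; apply: contraT => nz; case: no; exists k.
  have e := const_of_deriv h.
  move: nz0; rewrite e; move: r0; rewrite {1}e mevalC => ->.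
  by rewrite mpolyC0 eqxx.
have ak : (p0^`M(k)).@[y] != 0.
  apply/eqP => e; have := min _ (mderiv_over k Kp0) nzk e.
  by rewrite leqNgt msize_deriv.
have hV : forall i : 'I_n, exists v : 'I_n -> C,
   (forall j, jacX f x y j i + \sum_k ((f j)^`M(rshift n k)).@[pt x y] * v k = 0) /\
   \sum_k (p0^`M(k)).@[y] * v k = 0.
  move=> i; have [R [D [hD [hxD hyD]]]] := der_exists y hx (fun j => (i == j)%:R).
  exists (fun k => D (y k)); split.
  - move=> j.
    have hz : forall l, R (pt x y l).
      by move=> l; rewrite /pt; case: (split l) => a; [exact: (hxD a).1 | exact: hyD].
    have [_ e] := Qc_over hD hz (hfK j).
    rewrite hf0 (Dzero hD) big_split_ord /= in e.
    rewrite /jacX mxE [RHS]e; congr (_ + _).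
      rewrite -[LHS](sum_delta (fun l => ((f j)^`M(lshift n l)).@[pt x y])).
      by apply: eq_bigr => l _; rewrite pt_l (hxD l).2.
    by apply: eq_bigr => l _; rewrite pt_r.
  - have [_ e] := Qc_over hD hyD Kp0.
    by rewrite r0 (Dzero hD) in e; rewrite -e.
have [V hVV] := fin_all_exists hV.
pose M := \matrix_(k, i) V i k : 'M[C]_n.
pose JY := \matrix_(j, k) ((f j)^`M(rshift n k)).@[pt x y] : 'M[C]_n.
pose a := \row_k (p0^`M(k)).@[y] : 'rV[C]_n.
have eJ : jacX f x y = (- JY) *m M.
  apply/matrixP => j i; rewrite mulNmx.
  have := (hVV i).1 j; move/eqP; rewrite addr_eq0 => /eqP ->.
  rewrite !mxE; congr (- _); apply: eq_bigr => l _; rewrite !mxE //.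
have ea : a *m M = 0.
  apply/rowP => i; rewrite !mxE; apply: etrans (hVV i).2; apply: eq_bigr => l _; rewrite !mxE //.
have uM : M \in unitmx.
  rewrite unitmxE unitfE; apply: contraNneq hdet => d0.
  by rewrite eJ det_mulmx d0 mulr0.
have a0 : a = 0 by rewrite -(mulmxK uM a) ea mul0mx.
move: ak; have := congr1 (fun r : 'rV[C]_n => r ord0 k) a0; rewrite !mxE => ->.
by rewrite eqxx.
Qed.
End Main.

Unset Implicit Arguments.
Set Strict Implicit.

Theorem theorem1 (K : {pred C}) (hK : is_subfield K) (n : nat) (hn : (1 <= n)%N)
  (x y : 'I_n -> C) (f : 'I_n -> {mpoly C[n + n]})
  (hfK : forall j, f j \is a mpolyOver (n + n) K)
  (hf0 : forall j, (f j).@[pt x y] = 0)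
  (hx : alg_indep K x)
  (hdet : \det (jacX f x y) != 0) :
  alg_indep K y.
Proof. exact: (@main K hK n hn x y f hfK hf0 hx hdet). Qed.
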